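(* Let $n\geq 2$ and let $(A,\cdot,[\cdot,\ldots,\cdot])$ be a transposed Poisson $n$-Lie algebra. Then for all $h,x_1,\ldots,x_n,y_2,\ldots,y_n\in A$, $$\sum_{j=2}^n[[x_1,\ldots,x_n],y_2,\ldots,y_jh,\ldots,y_n]=\sum_{i=1}^n\sum_{\substack{j=1\\ j\neq i}}^n(-1)^{i-1}[[x_i,y_2,\ldots,y_n],x_1,\ldots,x_jh,\ldots,\hat{x}_i,\ldots,x_n],$$ where on the left $y_jh$ replaces $y_j$ in its slot, and on the right the outer bracket has as its remaining arguments $x_1,\ldots,x_n$ in order with $x_i$ omitted and $x_j$ replaced by $x_jh$.
   Context: An $n$-Lie algebra is a vector space $L$ with an $n$-linear skew-symmetric bracket $[\cdot,\ldots,\cdot]$ satisfying $[[x_1,\ldots,x_n],y_2,\ldots,y_n]=\sum_{i=1}^n[x_1,\ldots,x_{i-1},[x_i,y_2,\ldots,y_n],x_{i+1},\ldots,x_n]$ for all $x_i,y_j\in L$. A transposed Poisson $n$-Lie algebra (over $\mathbb{C}$) is a triple $(A,\cdot,[\cdot,\ldots,\cdot])$ where $(A,\cdot)$ is a commutative associative algebra, $(A,[\cdot,\ldots,\cdot])$ is an $n$-Lie algebra, and for all $h,a_1,\ldots,a_n\in A$: $n\,h\,[a_1,\ldots,a_n]=\sum_{i=1}^n[a_1,\ldots,h a_i,\ldots,a_n]$ (with $ha_i$ in the $i$-th slot). $\hat{x}_i$ means $x_i$ is omitted. *)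

(* Defs.v *)
(* The base field C is modelled as complex R = R[i] for an
   arbitrary R : realType (a complete archimedean ordered field, i.e. the reals),
   which is the field of complex numbers. *)
From HB Require Import structures.
From mathcomp Require Import all_boot all_order all_algebra all_fingroup.
From mathcomp Require Import complex.
From mathcomp Require Import reals.
Set Implicit Arguments. Unset Strict Implicit. Unset Printing Implicit Defensive.
Import Order.TTheory GRing.Theory Num.Theory.
Local Open Scope ring_scope.

Section TPnLie.
Variable (K : pzRingType) (A : lmodType K).

Definition replace (m : nat) (x : {ffun 'I_m -> A}) (i : 'I_m) (v : A) :
  {ffun 'I_m -> A} := [ffun k => if k == i then v else x k].

(* the family (a, y_2, ..., y_{k+1}) : first slot a, remaining slots y *)
Definition consA (k : nat) (a : A) (y : {ffun 'I_k -> A}) : {ffun 'I_k.+1 -> A} :=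
  [ffun l => if unlift ord0 l is Some j then y j else a].

Definition omit (k : nat) (x : {ffun 'I_k.+1 -> A}) (i : 'I_k.+1) :
  {ffun 'I_k -> A} := [ffun l => x (lift i l)].

Definition comm_assoc_algebra (mul : A -> A -> A) : Prop :=
  [/\ forall (a : K) (u v w : A), mul (a *: u + v) w = a *: mul u w + mul v w,
      forall u v, mul u v = mul v u
    & forall u v w, mul u (mul v w) = mul (mul u v) w].

Definition multilinear (m : nat) (br : {ffun 'I_m -> A} -> A) : Prop :=
  forall (x : {ffun 'I_m -> A}) (i : 'I_m) (a : K) (u v : A),
    br (replace x i (a *: u + v)) = a *: br (replace x i u) + br (replace x i v).

Definition skew_symmetric (m : nat) (br : {ffun 'I_m -> A} -> A) : Prop :=
  forall (x : {ffun 'I_m -> A}) (i j : 'I_m), i != j ->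
    br [ffun l => x (tperm i j l)] = - br x.

Definition filippov (k : nat) (br : {ffun 'I_k.+1 -> A} -> A) : Prop :=
  forall (x : {ffun 'I_k.+1 -> A}) (y : {ffun 'I_k -> A}),
    br (consA (br x) y) = \sum_(i < k.+1) br (replace x i (br (consA (x i) y))).

Definition nLie (k : nat) (br : {ffun 'I_k.+1 -> A} -> A) : Prop :=
  [/\ multilinear br, skew_symmetric br & filippov br].

Definition tp_compat (k : nat) (mul : A -> A -> A)
    (br : {ffun 'I_k.+1 -> A} -> A) : Prop :=
  forall (h : A) (a : {ffun 'I_k.+1 -> A}),
    k.+1%:R *: mul h (br a) = \sum_(i < k.+1) br (replace a i (mul h (a i))).

Definition transposed_Poisson_nLie (k : nat) (mul : A -> A -> A)
    (br : {ffun 'I_k.+1 -> A} -> A) : Prop :=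
  [/\ comm_assoc_algebra mul, nLie br & tp_compat mul br].

End TPnLie.

(* Main.v *)
Set Warnings "-all".
Require Import Defs.
From HB Require Import structures.
From mathcomp Require Import all_boot all_order all_algebra all_fingroup.
From mathcomp Require Import complex.
From mathcomp Require Import reals.
Import Order.TTheory GRing.Theory Num.Theory.
Local Open Scope ring_scope.
Set Implicit Arguments. Unset Strict Implicit.

Section Helpers.
Lemma lin0 (K : pzRingType) (A B : lmodType K) (f : A -> B)
  (hf : forall a u v, f (a *: u + v) = a *: f u + f v) : f 0 = 0.
Proof.
have := hf 1 0 0; rewrite scaler0 addr0 scale1r => H.
by apply: (@addrI _ (f 0)); rewrite addr0 -{1}H.
Qed.

Lemma linD (K : pzRingType) (A B : lmodType K) (f : A -> B)
  (hf : forall a u v, f (a *: u + v) = a *: f u + f v) u v : f (u + v) = f u + f v.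
Proof. by have := hf 1 u v; rewrite !scale1r. Qed.

Lemma linZ (K : pzRingType) (A B : lmodType K) (f : A -> B)
  (hf : forall a u v, f (a *: u + v) = a *: f u + f v) a u : f (a *: u) = a *: f u.
Proof. by have := hf a u 0; rewrite !addr0 (lin0 hf) addr0. Qed.

Lemma linB (K : pzRingType) (A B : lmodType K) (f : A -> B)
  (hf : forall a u v, f (a *: u + v) = a *: f u + f v) u v : f (u - v) = f u - f v.
Proof. by rewrite (linD hf) -scaleN1r (linZ hf) scaleN1r. Qed.

Lemma linS (K : pzRingType) (A B : lmodType K) (f : A -> B)
  (hf : forall a u v, f (a *: u + v) = a *: f u + f v) (I : Type) (r : seq I)
  (P : pred I) (F : I -> A) :
  f (\sum_(j <- r | P j) F j) = \sum_(j <- r | P j) f (F j).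
Proof.
apply: (big_rec2 (fun u v => f u = v)); first exact: lin0 hf.
by move=> i y1 y2 _ <-; rewrite (linD hf).
Qed.

Lemma replace_lin (K : pzRingType) (A : lmodType K) k (br : {ffun 'I_k -> A} -> A)
  (x : {ffun 'I_k -> A}) i : multilinear br ->
  forall a u v, br (replace x i (a *: u + v)) = a *: br (replace x i u) + br (replace x i v).
Proof. by move=> H a u v; apply: H. Qed.

Lemma replace_replace (K : pzRingType) (A : lmodType K) k (x : {ffun 'I_k -> A}) i u v :
  replace (replace x i u) i v = replace x i v.
Proof. by apply/ffunP => l; rewrite !ffunE; case: eqP. Qed.

Lemma replace_comm (K : pzRingType) (A : lmodType K) k (x : {ffun 'I_k -> A}) i j u v :
  i != j -> replace (replace x i u) j v = replace (replace x j v) i u.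
Proof.
move=> ij; apply/ffunP => l; rewrite !ffunE.
case: (eqVneq l j) => [E|]; case: (eqVneq l i) => // E'.
by move: ij; rewrite -E -E' eqxx.
Qed.

Lemma replace_self (K : pzRingType) (A : lmodType K) k (x : {ffun 'I_k -> A}) i u :
  replace x i u i = u.
Proof. by rewrite ffunE eqxx. Qed.

Lemma replace_other (K : pzRingType) (A : lmodType K) k (x : {ffun 'I_k -> A}) i j u :
  j != i -> replace x i u j = x j.
Proof. by move=> ji; rewrite ffunE (negbTE ji). Qed.

Lemma consA0 (K : pzRingType) (A : lmodType K) k (z : A) (y : {ffun 'I_k -> A}) :
  consA z y ord0 = z.
Proof. by rewrite ffunE unlift_none. Qed.

Lemma consAS (K : pzRingType) (A : lmodType K) k (z : A) (y : {ffun 'I_k -> A}) j :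
  consA z y (lift ord0 j) = y j.
Proof. by rewrite ffunE liftK. Qed.

Lemma replace_consA0 (K : pzRingType) (A : lmodType K) k (z v : A) (y : {ffun 'I_k -> A}) :
  replace (consA z y) ord0 v = consA v y.
Proof.
apply/ffunP => l; rewrite !ffunE; case: unliftP => [j ->|->].
  by rewrite eq_sym (negbTE (neq_lift _ _)).
by rewrite eqxx.
Qed.

Lemma replace_consAS (K : pzRingType) (A : lmodType K) k (z v : A) (y : {ffun 'I_k -> A}) j :
  replace (consA z y) (lift ord0 j) v = consA z (replace y j v).
Proof.
apply/ffunP => l; rewrite !ffunE; case: unliftP => [i ->|->].
  by rewrite (inj_eq (@lift_inj _ _)) ffunE.
by rewrite (negbTE (neq_lift _ _)).
Qed.

Lemma consA_omit (K : pzRingType) (A : lmodType K) k (br : {ffun 'I_k.+1 -> A} -> A) :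
  skew_symmetric br -> forall (w : {ffun 'I_k.+1 -> A}) z (i : 'I_k.+1),
  br (consA z (omit w i)) = (-1) ^+ i *: br (replace w i z).
Proof.
move=> sk w z [i Hi]; elim: i Hi w => [|i IH] Hi w.
  have ->: Ordinal Hi = ord0 by apply: val_inj.
  rewrite expr0 scale1r; congr br.
  apply/ffunP => l; rewrite !ffunE; case: unliftP => [j ->|->].
    by rewrite eq_sym (negbTE (neq_lift _ _)) ffunE.
  by rewrite eqxx.
have Hi' : (i < k.+1)%N by apply: ltnW.
set a := Ordinal Hi'; set b := Ordinal Hi.
have ab : a != b by rewrite -val_eqE /= ltn_eqF.
set w' := [ffun l => w (tperm a b l)].
have -> : omit w b = omit w' a.
  apply/ffunP => l; rewrite !ffunE; congr (w _).
  case: (ltngtP i l) => [il|li|il].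
  - rewrite tpermD ?neq_lift //.
      by apply/val_inj; rewrite /= /bump il (ltnW il).
    by rewrite -val_eqE /= /bump (ltnW il) add1n eqSS ltn_eqF.
  - have h1 : (i <= l)%N = false by rewrite leqNgt li.
    have h2 : (i.+1 <= l)%N = false by rewrite leqNgt ltnS (ltnW li).
    rewrite tpermD ?neq_lift //.
      by apply/val_inj; rewrite /= /bump h1 h2.
    by rewrite -val_eqE /= /bump h1 add0n gtn_eqF // ltnS ltnW.
  - have -> : lift a l = b by apply/val_inj; rewrite /= /bump il leqnn.
    by rewrite tpermR; apply/val_inj; rewrite /= /bump il leqNgt ltnSn.
rewrite (IH Hi' w').
have -> : replace w' a z = [ffun l => replace w b z (tperm a b l)].
  apply/ffunP => l; rewrite !ffunE.
  have -> : (tperm a b l == b) = (l == a).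
    by rewrite -[X in _ == X](tpermL a b) (inj_eq (@perm_inj _ _)).
  by [].
rewrite sk //= scalerN -scaleNr -mulN1r -exprS.
by [].
Qed.
Lemma final (K : fieldType) (V : lmodType K) (n : K) (L Rr SC SB hP Q : V) :
  n - 1 != 0 -> L = n*:SC - SB -> Rr = n*:hP - SC -> n*:hP = Q + L -> n*:Q = SB + Rr -> L = Rr.
Proof.
move=> n1 EL ER EH EQ.
have EQ' : (n - 1) *: Q = (n - 1) *: SC.
  rewrite !scalerBl !scale1r EQ ER EH EL.
  by rewrite addrCA addrAC (addrC Q) addrK -addrA addKr.
have QS : Q = SC.
  by rewrite -[Q]scale1r -(mulVf n1) -scalerA EQ' scalerA mulVf // scale1r.
by rewrite ER EH QS addrAC subrr add0r.
Qed.
Lemma sq (K : pzRingType) (i : nat) : (-1) ^+ i * (-1) ^+ i = 1 :> K.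
Proof. by rewrite -exprD -signr_odd oddD addbb. Qed.
End Helpers.

Theorem mainTheorem3 (R : realType) (m : nat) (A : lmodType (complex R))
    (mul : A -> A -> A) (br : {ffun 'I_m.+2 -> A} -> A) :
  transposed_Poisson_nLie mul br ->
  forall (h : A) (x : {ffun 'I_m.+2 -> A}) (y : {ffun 'I_m.+1 -> A}),
    \sum_(j < m.+1) br (consA (br x) (replace y j (mul (y j) h)))
    = \sum_(i < m.+2) \sum_(j < m.+2 | j != i)
        (-1) ^+ i *: br (consA (br (consA (x i) y))
                               (omit (replace x j (mul (x j) h)) i)).
Proof.
move=> [[mulL mulC mulA] [mlin skew fil] tp] h x y.
pose Y z := br (consA z y).
have Ylin : forall a u v, Y (a *: u + v) = a *: Y u + Y v.
  move=> a u v; rewrite /Y -(replace_consA0 0 (a *: u + v)) -(replace_consA0 0 u).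
  by rewrite -(replace_consA0 0 v); apply: mlin.
have rlin : forall w i a u v, br (replace w i (a *: u + v)) =
    a *: br (replace w i u) + br (replace w i v) by move=> w i; apply: mlin.
have mlin2 : forall a u v, mul h (a *: u + v) = a *: mul h u + mul h v.
  by move=> a u v; rewrite mulC mulL (mulC u) (mulC v).
pose T i j := br (replace (replace x j (mul h (x j))) i (Y (x i))).
pose SC := \sum_(i < m.+2) br (replace x i (mul h (Y (x i)))).
pose SB := \sum_(i < m.+2) br (replace x i (Y (mul h (x i)))).
pose P := br (consA (br x) y).
pose Q := Y (mul h (br x)).
have E1 : \sum_(j < m.+1) br (consA (br x) (replace y j (mul (y j) h)))
    = (m.+2)%:R *: SC - SB.
  under eq_bigr do rewrite fil.
  rewrite exchange_big /= /SC /SB scaler_sumr -sumrB; apply: eq_bigr => i _.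
  rewrite -(linS (rlin x i)) -(linZ (rlin x i)) -(linB (rlin x i)).
  congr (br (replace x i _)).
  have := tp h (consA (x i) y); rewrite big_ord_recl consA0 replace_consA0.
  under eq_bigr do rewrite consAS replace_consAS.
  move=> ->; rewrite /Y addrAC subrr add0r; apply: eq_bigr => j _; by rewrite mulC.
have E2a : \sum_(i < m.+2) \sum_(j < m.+2 | j != i)
        (-1) ^+ i *: br (consA (br (consA (x i) y))
                               (omit (replace x j (mul (x j) h)) i))
    = \sum_(i < m.+2) \sum_(j < m.+2 | j != i) T i j.
  apply: eq_bigr => i _; apply: eq_bigr => j ji.
  by rewrite (consA_omit skew) scalerA sq scale1r /T mulC.
have E2b : \sum_(i < m.+2) \sum_(j < m.+2 | j != i) T i j
    = (m.+2)%:R *: mul h P - SC.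
  rewrite /P fil (linS mlin2) scaler_sumr /SC -sumrB; apply: eq_bigr => i _.
  have := tp h (replace x i (Y (x i))); rewrite (bigD1 i) //= replace_self replace_replace.
  move=> ->; rewrite addrC addrK; apply: eq_bigr => j ji.
  by rewrite /T replace_other // replace_comm // eq_sym.
have E3 : (m.+2)%:R *: mul h P = Q +
    \sum_(j < m.+1) br (consA (br x) (replace y j (mul (y j) h))).
  rewrite /P tp big_ord_recl consA0 replace_consA0.
  under eq_bigr do rewrite consAS replace_consAS.
  congr (_ + _); apply: eq_bigr => j _; by rewrite mulC.
have E4 : (m.+2)%:R *: Q = SB + \sum_(i < m.+2) \sum_(j < m.+2 | j != i) T i j.
  rewrite /Q -(linZ Ylin) tp (linS Ylin).
  under eq_bigr => k _ do rewrite /Y fil (bigD1 k) //= replace_self replace_replace.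
  rewrite big_split /=; congr (_ + _).
  under eq_bigr do rewrite big_mkcond.
  rewrite exchange_big; apply: eq_bigr => i _; rewrite [RHS]big_mkcond; apply: eq_bigr => j _.
  rewrite eq_sym; case: (eqVneq j i) => //= ji.
  by rewrite /T replace_other // eq_sym.
rewrite -E2a in E4; apply: (@final (complex R) A (m.+2)%:R _ _ _ _ _ _ _ E1 (etrans E2a E2b) E3 E4).
by rewrite -[m.+2]addn1 natrD addrK pnatr_eq0.
Qed.
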